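(* For integers $N\ge2$ and $k\ge1$, let $E_k(2^N)$ (resp. $I_k(2^N)$) be the number of integers $0\le u<2^N$ such that $\sum_{i\ge0}\varepsilon_i(u)\varepsilon_{i+1}(u)\cdots\varepsilon_{i+k}(u)$ is even (resp. odd). Then for every real $A>1$, as $N\to\infty$, uniformly for integers $k\ge A\log N/\log2$, $$\frac{E_k(2^N)}{2^N}\ge1-2N^{1-A}+o(N^{1-A})\qquad\text{and}\qquad\frac{I_k(2^N)}{2^N}\le2N^{1-A}+o(N^{1-A}).$$
   Context: $\varepsilon_i(u)$ denotes the $i$-th binary digit of $u$ ($\varepsilon_0$ the units digit); the sum $\sum_i\varepsilon_i(u)\cdots\varepsilon_{i+k}(u)$ counts the (possibly overlapping) occurrences of $k+1$ consecutive digits $1$ in the binary expansion of $u$. *)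

(* Defs.v *)
From Stdlib Require Import Reals Arith List.
Import ListNotations.

Definition eps (i u : nat) : nat := Nat.b2n (Nat.testbit u i).

Definition run_prod (k i u : nat) : nat :=
  fold_right Nat.mul 1 (map (fun j => eps (i + j) u) (seq 0 (S k))).

(* sum_{i >= 0} eps_i(u) ... eps_(i+k)(u).  Since u < 2^u, all digits of
   index i >= u vanish, so the sum over i in [0, u] is the full sum. *)
Definition run_count (k u : nat) : nat :=
  fold_right Nat.add 0 (map (fun i => run_prod k i u) (seq 0 (S u))).

Definition E_count (k N : nat) : nat :=
  length (filter (fun u => Nat.even (run_count k u)) (seq 0 (2 ^ N))).
Definition I_count (k N : nat) : nat :=
  length (filter (fun u => Nat.odd (run_count k u)) (seq 0 (2 ^ N))).

(* Main.v *)
Require Import Defs.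
From Stdlib Require Import Reals Arith List Lia Lra FunctionalExtensionality.
Import ListNotations.
Fixpoint ones0 (k u : nat) : bool :=
  andb (Nat.odd u) (match k with 0 => true | S k' => ones0 k' (Nat.div2 u) end).

Fixpoint bad (k N u : nat) : bool :=
  match N with 0 => false | S N' => orb (ones0 k u) (bad k N' (Nat.div2 u)) end.

Lemma len_filter_split (f : nat -> bool) m :
  length (filter f (seq 0 (2*m))) =
  length (filter (fun v => f (2*v)) (seq 0 m)) + length (filter (fun v => f (2*v+1)) (seq 0 m)).
Proof.
  induction m as [|m IH]; [reflexivity|].
  replace (2 * S m) with (2*m + 2) by lia.
  rewrite seq_app, (seq_S m 0), !filter_app, !length_app, IH. simpl.
  replace (2 * m + 1) with (S (2*m)) by lia.
  replace (m + (m + 0) + 1) with (S (m+(m+0))) by lia. destruct (f (m+(m+0))), (f (S (m+(m+0)))); simpl; lia.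
Qed.

Lemma len_filter_mono (f g : nat -> bool) l :
  (forall x, f x = true -> g x = true) ->
  length (filter f l) <= length (filter g l).
Proof.
  intros H; induction l as [|a l IH]; simpl; [lia|].
  destruct (f a) eqn:E; [rewrite (H a E); simpl; lia|].
  destruct (g a); simpl; lia.
Qed.

Lemma len_filter_or (f g : nat -> bool) l :
  length (filter (fun x => orb (f x) (g x)) l) <= length (filter f l) + length (filter g l).
Proof.
  induction l as [|a l IH]; simpl; [lia|].
  destruct (f a), (g a); simpl; lia.
Qed.

Lemma len_filter_le (f : nat -> bool) l : length (filter f l) <= length l.
Proof. induction l; simpl; [lia|]; destruct (f a); simpl; lia. Qed.

Lemma len_filter_false (f : nat -> bool) l : (forall x, f x = false) -> length (filter f l) = 0.
Proof. intros H; induction l; simpl; [lia|]; rewrite H; auto. Qed.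

Lemma div2_2 v : Nat.div2 (2*v) = v.
Proof. apply Nat.div2_double. Qed.
Lemma div2_2S v : Nat.div2 (2*v+1) = v.
Proof. replace (2*v+1) with (S (2*v)) by lia. apply Nat.div2_succ_double. Qed.
Lemma odd_2 v : Nat.odd (2*v) = false.
Proof. rewrite <- Nat.negb_even, Nat.even_mul. reflexivity. Qed.
Lemma odd_2S v : Nat.odd (2*v+1) = true.
Proof. rewrite Nat.odd_add, odd_2. reflexivity. Qed.

Lemma C_bound k M : length (filter (ones0 k) (seq 0 (2^M))) * 2^(S k) <= 2^M.
Proof.
  revert k; induction M as [|M IH]; intros k.
  - simpl. destruct k; simpl; lia.
  - rewrite Nat.pow_succ_r', len_filter_split.
    rewrite (len_filter_false (fun v => ones0 k (2*v))) by (intros; destruct k; cbn [ones0]; rewrite odd_2; auto).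
    rewrite Nat.add_0_l.
    destruct k as [|k].
    + cbn [ones0]. replace (fun v => andb (Nat.odd (2 * v + 1)) true) with (fun _ : nat => true)
        by (apply functional_extensionality; intros; rewrite odd_2S; auto).
      pose proof (len_filter_le (fun _ => true) (seq 0 (2^M))). rewrite length_seq in H. rewrite Nat.pow_1_r. lia.
    + replace (fun v => ones0 (S k) (2 * v + 1)) with (ones0 k)
        by (apply functional_extensionality; intros; cbn [ones0]; rewrite odd_2S, div2_2S; auto).
      specialize (IH k). rewrite Nat.pow_succ_r'. lia.
Qed.

Lemma B_bound k N : length (filter (bad k N) (seq 0 (2^N))) * 2^(S k) <= N * 2^N.
Proof.
  induction N as [|N IH].
  - simpl. lia.
  - rewrite Nat.pow_succ_r', len_filter_split.
    replace (fun v => bad k (S N) (2 * v)) with (bad k N)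
      by (apply functional_extensionality; intros; cbn [bad];
          replace (ones0 k (2*x)) with false by (destruct k; cbn [ones0]; rewrite odd_2; auto);
          rewrite div2_2; auto).
    replace (fun v => bad k (S N) (2 * v + 1)) with (fun v => orb (ones0 k (2*v+1)) (bad k N v))
      by (apply functional_extensionality; intros; cbn [bad]; rewrite div2_2S; auto).
    pose proof (len_filter_or (fun v => ones0 k (2*v+1)) (bad k N) (seq 0 (2^N))) as H1.
    assert (H2 : length (filter (fun v => ones0 k (2 * v + 1)) (seq 0 (2 ^ N))) * 2^(S k) <= 2 ^ S N).
    { pose proof (C_bound k (S N)) as HC. rewrite Nat.pow_succ_r', len_filter_split in HC.
      rewrite (len_filter_false (fun v => ones0 k (2*v))) in HC
        by (intros; destruct k; cbn [ones0]; rewrite odd_2; auto).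
      replace (2^S N) with (2*2^N) by (simpl; lia). lia. }
    rewrite Nat.pow_succ_r' in H2. cbv beta in H1. rewrite !Nat.pow_succ_r' in *. nia.
Qed.
Lemma bits_ones0 k u : (forall j, (j <= k)%nat -> Nat.testbit u j = true) -> ones0 k u = true.
Proof.
  revert u; induction k as [|k IH]; intros u H; cbn [ones0].
  - rewrite <- Nat.bit0_odd, (H 0%nat); auto.
  - rewrite <- Nat.bit0_odd, (H 0%nat) by lia. simpl. apply IH.
    intros j Hj. rewrite Nat.testbit_div2. apply H. lia.
Qed.

Lemma bits_bad i k N u : (i + k < N)%nat ->
  (forall j, (j <= k)%nat -> Nat.testbit u (i + j) = true) -> bad k N u = true.
Proof.
  revert N u; induction i as [|i IH]; intros N u HN H; destruct N as [|N]; try lia; cbn [bad].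
  - rewrite bits_ones0; auto.
  - rewrite (IH N); [apply Bool.orb_true_r|lia|].
    intros j Hj. rewrite Nat.testbit_div2. replace (S (i + j)) with (S i + j)%nat by lia. auto.
Qed.

Lemma prod_nz (f : nat -> nat) l : fold_right Nat.mul 1%nat (map f l) <> 0%nat ->
  forall x, In x l -> f x <> 0%nat.
Proof.
  induction l as [|a l IH]; simpl; intros H x Hx; [contradiction|].
  destruct Hx as [<-|Hx].
  - intro E; rewrite E in H; simpl in H; lia.
  - apply IH; auto. intro E; rewrite E in H; lia.
Qed.

Lemma sum_nz (f : nat -> nat) l : fold_right Nat.add 0%nat (map f l) <> 0%nat ->
  exists x, f x <> 0%nat.
Proof.
  induction l as [|a l IH]; simpl; intros H; [lia|].
  destruct (Nat.eq_dec (f a) 0) as [E|E]; eauto. apply IH. lia.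
Qed.

Lemma testbit_lt u N n : (u < 2 ^ N)%nat -> Nat.testbit u n = true -> (n < N)%nat.
Proof.
  intros Hu Ht. destruct (Nat.eq_dec u 0) as [->|Hz]; [rewrite Nat.bits_0 in Ht; discriminate|].
  apply Nat.log2_lt_pow2 in Hu; [|lia].
  destruct (Nat.lt_ge_cases n N) as [|Hn]; auto.
  rewrite Nat.bits_above_log2 in Ht by lia. discriminate.
Qed.

Lemma odd_bad k N u : (u < 2 ^ N)%nat -> Nat.odd (run_count k u) = true -> bad k N u = true.
Proof.
  intros Hu Ho.
  assert (Hnz : run_count k u <> 0%nat) by (intro E; rewrite E in Ho; discriminate).
  destruct (sum_nz _ _ Hnz) as [i Hi].
  assert (Hb : forall j, (j <= k)%nat -> Nat.testbit u (i + j) = true).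
  { intros j Hj. pose proof (prod_nz _ _ Hi j) as P.
    assert (In j (seq 0 (S k))) by (apply in_seq; lia).
    specialize (P H). unfold eps in P. destruct (Nat.testbit u (i+j)); [auto|simpl in P; lia]. }
  apply (bits_bad i); auto. apply (testbit_lt u N); auto.
Qed.

Lemma len_filter_mono_in (f g : nat -> bool) l :
  (forall x, In x l -> f x = true -> g x = true) ->
  length (filter f l) <= length (filter g l).
Proof.
  intros H; induction l as [|a l IH]; simpl; [lia|].
  assert (IH' : length (filter f l) <= length (filter g l)) by (apply IH; intros; apply H; simpl; auto).
  destruct (f a) eqn:E; [rewrite (H a (or_introl eq_refl) E); simpl; lia|].
  destruct (g a); simpl; lia.
Qed.

Lemma I_bound k N : (I_count k N * 2 ^ S k <= N * 2 ^ N)%nat.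
Proof.
  pose proof (B_bound k N).
  assert (I_count k N <= length (filter (bad k N) (seq 0 (2 ^ N))))%nat.
  { unfold I_count. apply len_filter_mono_in. intros x Hx Ho.
    apply in_seq in Hx. apply odd_bad; auto. lia. }
  nia.
Qed.

Lemma EI k N : (E_count k N + I_count k N = 2 ^ N)%nat.
Proof.
  unfold E_count, I_count. rewrite <- (length_seq (2^N) 0) at 3.
  induction (seq 0 (2^N)) as [|a l IH]; simpl; auto.
  rewrite <- Nat.negb_even. destruct (Nat.even (run_count k a)); simpl; lia.
Qed.
Open Scope R_scope.

Theorem mainTheorem14 :
  forall A : R, 1 < A ->
  forall eps0 : R, 0 < eps0 ->
  exists N0 : nat, forall N k : nat,
    (2 <= N)%nat -> (N0 <= N)%nat -> (1 <= k)%nat ->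
    INR k >= A * ln (INR N) / ln 2 ->
    INR (E_count k N) / INR (2 ^ N)
      >= 1 - 2 * Rpower (INR N) (1 - A) - eps0 * Rpower (INR N) (1 - A) /\
    INR (I_count k N) / INR (2 ^ N)
      <= 2 * Rpower (INR N) (1 - A) + eps0 * Rpower (INR N) (1 - A).
Proof.
  intros A HA eps0 He. exists 0%nat. intros N k HN _ Hk Hkl.
  set (r := Rpower (INR N) (1 - A)).
  assert (Hr : 0 < r) by (unfold r, Rpower; apply exp_pos).
  assert (HNpos : 0 < INR N) by (apply lt_0_INR; lia).
  assert (Hp : 0 < INR (2 ^ N)) by (apply lt_0_INR; apply Nat.neq_0_lt_0, Nat.pow_nonzero; lia).
  assert (Hln2 : 0 < ln 2) by (rewrite <- ln_1; apply ln_increasing; lra).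
  assert (Hpk : Rpower (INR N) A <= INR (2 ^ k)).
  { rewrite pow_INR, <- Rpower_pow by (simpl; lra). unfold Rpower.
    assert (A * ln (INR N) <= INR k * ln 2).
    { apply Rge_le in Hkl. apply (Rmult_le_compat_r (ln 2)) in Hkl; [|lra].
      unfold Rdiv in Hkl. rewrite Rmult_assoc, Rinv_l in Hkl by lra. lra. }
    simpl INR. destruct (Rle_lt_or_eq_dec _ _ H) as [H'|H'];
      [left; apply exp_increasing; auto | rewrite H'; right; auto]. }
  assert (HNr : INR N = r * Rpower (INR N) A).
  { unfold r. rewrite <- Rpower_plus. replace (1 - A + A) with 1 by ring.
    rewrite Rpower_1; auto. }
  assert (HpA : 0 < Rpower (INR N) A) by (unfold Rpower; apply exp_pos).
  pose proof (I_bound k N) as HI. apply le_INR in HI. rewrite !mult_INR in HI.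
  assert (Hsk : INR (2 ^ S k) = 2 * INR (2 ^ k)) by (rewrite !pow_INR; simpl; ring).
  rewrite Hsk in HI.
  assert (Hfrac : INR (I_count k N) / INR (2 ^ N) <= r).
  { apply (Rmult_le_reg_r (INR (2 ^ N))); auto. unfold Rdiv. rewrite Rmult_assoc, Rinv_l by lra.
    assert (INR (I_count k N) * INR (2 ^ k) <= r * INR (2 ^ k) * INR (2 ^ N)).
    { assert (r * Rpower (INR N) A <= r * INR (2^k)) by (apply Rmult_le_compat_l; lra).
      assert (0 <= INR (I_count k N)) by apply pos_INR.
      nra. }
    assert (0 < INR (2 ^ k)) by (apply lt_0_INR; apply Nat.neq_0_lt_0, Nat.pow_nonzero; lia).
    nra. }
  pose proof (EI k N) as HEI. apply (f_equal INR) in HEI. rewrite plus_INR in HEI.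
  assert (HE : INR (E_count k N) / INR (2 ^ N) = 1 - INR (I_count k N) / INR (2 ^ N)).
  { rewrite <- HEI. field. lra. }
  assert (0 <= eps0 * r) by nra.
  split; lra.
Qed.
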